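(* Let $(X,d,\mu)$ be unbounded, with base point $a$, and assume $X$ is uniformly perfect at $a$ for radii $\ge1$ with constant $\kappa$, $\mu$ is doubling with constant $C_\mu$, and there are $s,C_s>0$ with $$\frac{\mu(B(a,r))}{\mu(B(a,R))}\ge C_s\Bigl(\frac rR\Bigr)^s\quad\text{whenever }1\le r\le R<\infty.$$ If $q>s$, then for every $x\in\widehat X$, $$\hat\mu_q(B_a(x,r))\simeq\begin{cases}\hat d(x)^q\,\mu\Bigl(B\Bigl(x,\dfrac{r}{\hat d(x)^2}\Bigr)\Bigr), & \text{if } r\le\tfrac13\hat d(x),\\[2mm] r^q\,\mu(B(a,1/r)), & \text{if } \tfrac16\hat d(x)\le r\le 2,\end{cases}$$ where the comparison constants in the first case depend only on $C_\mu$, and in the second case only on $C_\mu,\kappa,C_s$ and $q-s$.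
   Context: $\mu$ is a positive complete Borel measure on the metric space $(X,d)$ with $0<\mu(B)<\infty$ for every ball; balls are open, $B(x,r)=\{y\in X:d(x,y)<r\}$. $\mu$ is doubling if there is $C_\mu$ with $\mu(B(x,2r))\le C_\mu\mu(B(x,r))$ for all balls. $X$ is uniformly perfect at $a$ for radii $\ge1$ with constant $\kappa>1$ if $B(a,\kappa r)\setminus B(a,r)\ne\emptyset$ for all $r\ge1$. Sphericalization: write $|x|=d(x,a)$, $\widehat X=X\cup\{\infty\}$, $d_a(x,y)=\frac{d(x,y)}{(1+|x|)(1+|y|)}$ for $x,y\in X$, $d_a(x,\infty)=d_a(\infty,x)=\frac1{1+|x|}$, $d_a(\infty,\infty)=0$; $\hat d(x,y)=\inf\sum_{j=1}^k d_a(x_{j-1},x_j)$ over finite chains $x=x_0,\dots,x_k=y$ in $\widehat X$; $\hat d(x):=\hat d(x,\infty)=\frac1{1+|x|}$ (so $\hat d(\infty)=0$). $B_a(x,r)=\{y\in\widehat X:d_a(x,y)<r\}$. The measure $\hat\mu_q$ on $\widehat X$ is $d\hat\mu_q(x)=\frac{d\mu(x)}{(1+|x|)^q}$ on $X$ with $\hat\mu_q(\{\infty\})=0$. $A\simeq B$ means $C^{-1}B\le A\le CB$ for a constant $C>0$. *)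

(* Defs.v *)
From HB Require Import structures.
From mathcomp Require Import all_boot all_order all_algebra.
From mathcomp Require Import all_classical all_reals all_analysis.
Set Implicit Arguments. Unset Strict Implicit. Unset Printing Implicit Defensive.
Import Order.TTheory GRing.Theory Num.Theory.
Local Open Scope classical_set_scope.
Local Open Scope ring_scope.

Definition is_metric (R : realType) (X : Type) (d : X -> X -> R) : Prop :=
  (forall x y, 0 <= d x y) /\ (forall x y, d x y = 0 <-> x = y) /\
  (forall x y, d x y = d y x) /\ (forall x y z, d x z <= d x y + d y z).

Definition dball (R : realType) (X : Type) (d : X -> X -> R) (x : X) (r : R)
  : set X := [set y | d x y < r].

Definition dopen (R : realType) (X : Type) (d : X -> X -> R) (U : set X) : Prop :=
  forall x, U x -> exists2 e, 0 < e & dball d x e `<=` U.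

Definition unbounded (R : realType) (X : Type) (d : X -> X -> R) : Prop :=
  forall M : R, exists x y, M < d x y.

Definition unif_perfect_at (R : realType) (X : Type) (d : X -> X -> R)
  (a : X) (kappa : R) : Prop :=
  1 < kappa /\ forall r, 1 <= r -> exists y, ~ dball d a r y /\ dball d a (kappa * r) y.

Definition doubling (R : realType) (d0 : measure_display) (X : measurableType d0)
  (d : X -> X -> R) (mu : set X -> \bar R) (Cmu : R) : Prop :=
  forall x r, (mu (dball d x (2 * r)) <= Cmu%:E * mu (dball d x r))%E.

(* Sphericalization: hat X = option X, with None = infinity. *)
Definition da (R : realType) (X : Type) (d : X -> X -> R) (a : X)
  (x y : option X) : R :=
  match x, y with
  | Some x, Some y => d x y / ((1 + d a x) * (1 + d a y))
  | Some x, None => 1 / (1 + d a x)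
  | None, Some y => 1 / (1 + d a y)
  | None, None => 0
  end.

(* hat d(x) = hat d(x, infinity) = 1/(1+|x|), hat d(infinity) = 0 *)
Definition dhat (R : realType) (X : Type) (d : X -> X -> R) (a : X)
  (x : option X) : R :=
  match x with Some y => 1 / (1 + d a y) | None => 0 end.

Definition Ba (R : realType) (X : Type) (d : X -> X -> R) (a : X)
  (x : option X) (r : R) : set (option X) := [set y | da d a x y < r].

Definition muhat (R : realType) (d0 : measure_display) (X : measurableType d0)
  (d : X -> X -> R) (a : X) (mu : {measure set X -> \bar R}) (q : R)
  (A : set (option X)) : \bar R :=
  (\int[mu]_(y in [set y | A (Some y)]) ((1 + d a y) `^ (- q))%:E)%E.

(* Main.v *)
Require Import Defs.
From HB Require Import structures.
From mathcomp Require Import all_boot all_order all_algebra.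
From mathcomp Require Import all_classical all_reals all_analysis.
From mathcomp Require Import ring lra measurable_realfun.
Import Order.TTheory GRing.Theory Num.Theory.
Local Open Scope classical_set_scope.
Local Open Scope ring_scope.
Section Aux.
Context (R : realType) (d0 : measure_display) (X : measurableType d0)
  (mu : {measure set X -> \bar R}).

Lemma my_le (D E : set X) (f g : X -> \bar R) :
  (forall x, D x -> (0 <= f x)%E) -> (forall x, E x -> (0 <= g x)%E) ->
  (forall x, D x -> E x /\ (f x <= g x)%E) ->
  (\int[mu]_(x in D) f x <= \int[mu]_(x in E) g x)%E.
Proof.
move=> f0 g0 fg; rewrite !ge0_integralE//.
apply: ereal_sup_le => _ /= [h hf <-]; exists h => //= x.
apply: (le_trans (hf x)); rewrite /patch.
case: ifPn => [|_].
  rewrite inE => /fg [Ex le]; by rewrite ifT ?inE.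
by case: ifPn => // /[!inE] /g0.
Qed.
End Aux.
Section Pw.
Context (R : realType).
Implicit Types (a u v p x : R).

Lemma pw_pos a x : 0 < a -> a `^ x = expR (x * ln a).
Proof. by move=> a0; rewrite /powR gt_eqF. Qed.

Lemma pw_inv a x : 0 < a -> (a^-1) `^ x = a `^ (- x).
Proof.
move=> a0; rewrite !pw_pos ?invr_gt0 //.
by rewrite lnV ?posrE // mulrN mulNr.
Qed.

Lemma pw_bnd p u : 2^-1 <= u -> u <= 2 ->
  u `^ p <= 2 `^ `|p| /\ 2 `^ (- `|p|) <= u `^ p.
Proof.
move=> h1 h2; have u0 : 0 < u by apply: lt_le_trans h1; rewrite invr_gt0.
rewrite !pw_pos //; have l1 : ln u <= ln 2 by rewrite ler_ln ?posrE.
have l2 : - ln 2 <= ln u.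
  by rewrite -lnV ?posrE // ler_ln ?posrE ?invr_gt0.
have l0 : 0 <= ln (2:R) by rewrite ln_ge0 // ler1n.
have hn : `|p * ln u| <= `|p| * ln 2.
  rewrite normrM ler_wpM2l //; apply/ler_normlP; split; lra.
move/ler_normlP : hn => [hn1 hn2].
by rewrite !ler_expR; split; lra.
Qed.

Lemma pw_decr q u v : 0 < q -> 0 < u -> u <= v -> v `^ (- q) <= u `^ (- q).
Proof.
move=> q0 u0 uv; have v0 : 0 < v by exact: lt_le_trans uv.
rewrite !pw_pos // ler_expR.
have : ln u <= ln v by rewrite ler_ln ?posrE.
nra.
Qed.

Lemma pw_incr q u v : 0 <= q -> 0 < u -> u <= v -> u `^ q <= v `^ q.
Proof.
move=> q0 u0 uv; have v0 : 0 < v by exact: lt_le_trans uv.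
rewrite !pw_pos // ler_expR.
have : ln u <= ln v by rewrite ler_ln ?posrE.
nra.
Qed.

Lemma pw_2k p k : (2 ^+ k : R) `^ p = (2 `^ p) ^+ k.
Proof.
rewrite -powR_mulrn ?powR_ge0 // -powRrM mulrC powRrM powR_mulrn //.
Qed.

Lemma pw_gt0 u p : 0 < u -> 0 < u `^ p.
Proof. by move=> u0; rewrite powR_gt0. Qed.
End Pw.
Section Base.
Context (R : realType) (d0 : measure_display) (X : measurableType d0)
  (d : X -> X -> R) (mu : {measure set X -> \bar R}) (a : X) (Cmu : R).
Hypothesis hm : is_metric d.
Hypothesis hopen : forall U, dopen d U -> measurable U.
Hypothesis hpos : forall x r, 0 < r ->
  (0 < mu (dball d x r))%E /\ (mu (dball d x r) < +oo)%E.
Hypothesis hdb : doubling d mu Cmu.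

Lemma d_ge0 x y : 0 <= d x y. Proof. by case: hm. Qed.
Lemma d_sym x y : d x y = d y x. Proof. by case: hm => _ [_ []]. Qed.
Lemma d_tri x y z : d x z <= d x y + d y z. Proof. by case: hm => _ [_ [_]]. Qed.
Lemma d_xx x : d x x = 0. Proof. by case: hm => _ [/(_ x x) [_ ->]]. Qed.

Lemma lip_open (h : X -> R) L c : 0 < L ->
  (forall x y, h y <= h x + L * d x y) -> dopen d [set y | h y < c].
Proof.
move=> L0 hL x /= hx; exists ((c - h x) / L); first by rewrite divr_gt0 // subr_gt0.
move=> y; rewrite /dball /= => dxy.
have h1 : L * d x y < c - h x by rewrite mulrC -ltr_pdivlMr.
have := hL x y; lra.
Qed.

Lemma ball_meas x r : measurable (dball d x r).
Proof.
apply: hopen; apply: (@lip_open (d x) 1) => // y z.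
by rewrite mul1r d_tri.
Qed.

Definition m x r := fine (mu (dball d x r)).

Lemma mE x r : 0 < r -> mu (dball d x r) = (m x r)%:E.
Proof.
move=> r0; have [h1 h2] := hpos x _ r0.
by rewrite /m fineK // ge0_fin_numE // ltW.
Qed.

Lemma m_gt0 x r : 0 < r -> 0 < m x r.
Proof. by move=> r0; have [h1 h2] := hpos x _ r0; rewrite -lte_fin -mE. Qed.

Lemma m_sub x r y r' : 0 < r -> 0 < r' -> dball d x r `<=` dball d y r' ->
  m x r <= m y r'.
Proof.
move=> r0 r'0 sub; rewrite -lee_fin -!mE //.
exact: (le_measure mu (mem_set (ball_meas _ _)) (mem_set (ball_meas _ _)) sub).
Qed.

Lemma m_le x r r' : 0 < r -> r <= r' -> m x r <= m x r'.
Proof.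
move=> r0 rr; apply: m_sub => //; first exact: lt_le_trans rr.
by move=> y; rewrite /dball /= => h; exact: lt_le_trans rr.
Qed.

Lemma m_dbl x r : 0 < r -> m x (2 * r) <= Cmu * m x r.
Proof.
move=> r0; have r20 : 0 < 2 * r by rewrite mulr_gt0.
by rewrite -lee_fin EFinM -(mE x _ r0) -(mE x _ r20); exact: hdb.
Qed.

Lemma Cmu_ge1 : 1 <= Cmu.
Proof.
have h1 := m_dbl a _ ltr01.
have h2 : m a 1 <= m a (2 * 1) by apply: m_le => //; lra.
have h3 := m_gt0 a _ ltr01.
rewrite -(ler_pM2r h3) mul1r; lra.
Qed.

Lemma m_dbln x r n : 0 < r -> m x (2 ^+ n * r) <= Cmu ^+ n * m x r.
Proof.
move=> r0; elim: n => [|n IH]; first by rewrite !expr0 !mul1r.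
have p0 : 0 < 2 ^+ n * r by rewrite mulr_gt0 // exprn_gt0.
rewrite exprS -mulrA (le_trans (m_dbl _ _ p0)) //.
by rewrite exprS -mulrA ler_pM2l ?(lt_le_trans ltr01 Cmu_ge1).
Qed.

Lemma muhat_lb q (A : set (option X)) z r c : 0 < r -> 0 <= c ->
  (forall y, d z y < r -> A (Some y) /\ c <= (1 + d a y) `^ (- q)) ->
  (c%:E * (m z r)%:E <= muhat d a mu q A)%E.
Proof.
move=> r0 c0 H; rewrite -(mE z _ r0).
rewrite -(integral_cst mu (ball_meas z r)) /muhat.
apply: my_le => [x _|x _|y].
- by rewrite lee_fin.
- by rewrite lee_fin powR_ge0.
- by move=> /H [h1 h2]; split => //; rewrite lee_fin.
Qed.

Lemma muhat_ub q (A : set (option X)) z r c : 0 < r -> 0 <= c ->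
  (forall y, A (Some y) -> d z y < r /\ (1 + d a y) `^ (- q) <= c) ->
  (muhat d a mu q A <= c%:E * (m z r)%:E)%E.
Proof.
move=> r0 c0 H; rewrite -(mE z _ r0).
rewrite -(integral_cst mu (ball_meas z r)) /muhat.
apply: my_le => [x _|x _|y].
- by rewrite lee_fin powR_ge0.
- by rewrite lee_fin.
- by move=> /H [h1 h2]; split => //; rewrite lee_fin.
Qed.

Lemma muhat_mono q (A B : set (option X)) :
  (forall y, A (Some y) -> B (Some y)) ->
  (muhat d a mu q A <= muhat d a mu q B)%E.
Proof.
move=> H; rewrite /muhat; apply: my_le => [x _|x _|y].
- by rewrite lee_fin powR_ge0.
- by rewrite lee_fin powR_ge0.
- by move=> /H.
Qed.
Lemma Ba_some x r y : Ba d a (Some x) r (Some y) =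
  (d x y < r * ((1 + d a x) * (1 + d a y))).
Proof.
rewrite /Ba /da /= ltr_pdivrMr // mulr_gt0 //.
  by rewrite (lt_le_trans ltr01) // lerDl d_ge0.
by rewrite (lt_le_trans ltr01) // lerDl d_ge0.
Qed.

Lemma Ba_none r y : Ba d a None r (Some y) = (1 < r * (1 + d a y)).
Proof.
rewrite /Ba /da /= ltr_pdivrMr //.
by rewrite (lt_le_trans ltr01) // lerDl d_ge0.
Qed.

Lemma tri_a x y : d a x <= d a y + d x y.
Proof. by rewrite (d_sym x y) d_tri. Qed.

Lemma case1 q (x : X) r : 0 < r -> r <= dhat d a (Some x) / 3 ->
  (((2 `^ `|q| * Cmu)^-1)%:E * ((dhat d a (Some x) `^ q)%:E
      * mu (dball d x (r / (dhat d a (Some x)) ^+ 2))) <=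
    muhat d a mu q (Ba d a (Some x) r) /\
   muhat d a mu q (Ba d a (Some x) r) <=
    (2 `^ `|q| * Cmu)%:E * ((dhat d a (Some x) `^ q)%:E
      * mu (dball d x (r / (dhat d a (Some x)) ^+ 2))))%E.
Proof.
rewrite /dhat => r0 hr.
set A := 1 + d a x.
have A1 : 1 <= A by rewrite lerDl d_ge0.
have A0 : 0 < A by exact: lt_le_trans A1.
have -> : r / (1 / A) ^+ 2 = r * A * A.
  by rewrite expr2; field; rewrite gt_eqF.
have -> : (1 / A) `^ q = A `^ (- q) by rewrite div1r pw_inv.
set u := r * A.
have u0 : 0 < u by rewrite mulr_gt0.
have u3 : u <= 1 / 3.
  have h : r * A <= 1 / A / 3 * A by rewrite ler_pM2r.
  have e : 1 / A / 3 * A = 1 / 3 by field; rewrite gt_eqF.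
  by rewrite /u -e.
have rho0 : 0 < u * A by rewrite mulr_gt0.
have Cmu1 := Cmu_ge1.
have Cmu0 : 0 < Cmu by exact: lt_le_trans Cmu1.
have p0 : 0 < 2 `^ `|q| by rewrite pw_gt0.
have Aq0 : 0 < A `^ (- q) by rewrite pw_gt0.
rewrite (mE x _ rho0).
have wt : forall y, 2^-1 <= (1 + d a y) / A -> (1 + d a y) / A <= 2 ->
  (1 + d a y) `^ (- q) <= 2 `^ `|q| * A `^ (- q) /\
  (2 `^ `|q| )^-1 * A `^ (- q) <= (1 + d a y) `^ (- q).
  move=> y h1 h2; have [w1 w2] := @pw_bnd _ (- q) _ h1 h2.
  have -> : 1 + d a y = A * ((1 + d a y) / A) by field; rewrite gt_eqF.
  rewrite powRM ?(ltW A0) //; last by rewrite (le_trans _ h1) // invr_ge0.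
  rewrite normrN -powRN in w1 w2 *.
  rewrite [_ * A `^ _]mulrC; split; first by rewrite ler_pM2l.
  by rewrite mulrC ler_pM2l.
split.
- have rh0 : 0 < u * A / 2 by rewrite divr_gt0.
  apply: (le_trans _ (muhat_lb q _ x _ ((2 `^ `|q| )^-1 * A `^ (- q)) rh0 _ _)); last 2 first.
  + by rewrite mulr_ge0 // ?invr_ge0 ltW.
  + move=> y hy; have t0 := d_ge0 x y; have tr1 := tri_a x y.
    have tr2 := d_tri a x y.
    set B := 1 + d a y in tr1 tr2 *; rewrite -/A in tr1.
    have B0 : 0 < B by rewrite /B (lt_le_trans ltr01) // lerDl d_ge0.
    have ht : d x y < u * A / 2 by [].
    have uA : u * A <= A / 3 by nra.
    have eA : A = 1 + d a x by [].
    have eB : B = 1 + d a y by [].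
    split.
      rewrite Ba_some -/A -/B mulrA -/u.
      have hB : u * (A - d x y) <= u * B.
        by rewrite ler_pM2l //; lra.
      have hut : u * d x y <= d x y / 3 by nra.
      have : u * (A - d x y) = u * A - u * d x y by ring.
      lra.
    rewrite /B; apply: (proj2 (wt y _ _)).
      rewrite ler_pdivlMr // -/B; lra.
    rewrite ler_pdivrMr // -/B; lra.
  rewrite -!EFinM lee_fin.
  have hm2 : m x (u * A) <= Cmu * m x (u * A / 2).
    have := m_dbl x _ rh0; have -> // : 2 * (u * A / 2) = u * A by field.
  have h : m x (u * A) / Cmu <= m x (u * A / 2) by rewrite ler_pdivrMr // [_ * Cmu]mulrC.
  have -> : (2 `^ `|q| * Cmu)^-1 * (A `^ (- q) * m x (u * A)) =
    ((2 `^ `|q|)^-1 * A `^ (- q)) * (m x (u * A) / Cmu).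
    by field; rewrite !gt_eqF.
  by rewrite ler_pM2l // mulr_gt0 // invr_gt0.
- have rh0 : 0 < 2 * (u * A) by rewrite mulr_gt0.
  apply: (le_trans (muhat_ub q _ x _ (2 `^ `|q| * A `^ (- q)) rh0 _ _)).
  + by rewrite mulr_ge0 // ltW.
  + move=> y hy; have t0 := d_ge0 x y; have tr1 := tri_a x y.
    have tr2 := d_tri a x y.
    set B := 1 + d a y in tr1 tr2 hy *.
    have B0 : 0 < B by rewrite /B (lt_le_trans ltr01) // lerDl d_ge0.
    have eA : A = 1 + d a x by [].
    have eB : B = 1 + d a y by [].
    move: hy; rewrite Ba_some -/A -/B mulrA -/u => ht.
    have uA : u * A <= A / 3 by nra.
    have hB : u * B <= u * (A + d x y) by rewrite ler_pM2l //; lra.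
    have hut : u * d x y <= d x y / 3 by nra.
    have : u * (A + d x y) = u * A + u * d x y by ring.
    move=> e; have ht2 : d x y < 3 / 2 * (u * A) by lra.
    split; first by lra.
    rewrite /B; apply: (proj1 (wt y _ _)).
      rewrite ler_pdivlMr // -/B; lra.
    rewrite ler_pdivrMr // -/B; lra.
  rewrite -!EFinM lee_fin.
  have h := m_dbl x _ rho0.
  have -> : 2 `^ `|q| * Cmu * (A `^ (- q) * m x (u * A)) =
    (2 `^ `|q| * A `^ (- q)) * (Cmu * m x (u * A)) by ring.
  by rewrite ler_pM2l // mulr_gt0.
Qed.
Section Case2.
Variables (kappa s Cs q : R).
Hypothesis s0 : 0 < s.
Hypothesis Cs0 : 0 < Cs.
Hypothesis sq : s < q.
Hypothesis hup : unif_perfect_at d a kappa.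
Hypothesis hgr : forall r R', 1 <= r -> r <= R' ->
  Cs * (r / R') `^ s <= m a r / m a R'.

Definition n0 := Num.Def.archi_bound (2 * kappa + 1).

Lemma q0 : 0 < q. Proof. exact: lt_trans sq. Qed.

Lemma kappa1 : 1 < kappa. Proof. by case: hup. Qed.

Lemma hn0 : 2 * kappa + 1 <= 2 ^+ n0.
Proof.
have k1 := kappa1.
have h := @archi_boundP R (2 * kappa + 1) ltac:(lra).
rewrite -/n0 in h; apply: (le_trans (ltW h)).
have : (n0 < 2 ^ n0)%N by apply: ltn_expl.
by move/ltnW; rewrite -(ler_nat R) natrX.
Qed.

Lemma m_pos_ball x r : 0 < r -> 0 < m x r. Proof. exact: m_gt0. Qed.

Lemma Linf r : 0 < r -> r <= 2 ->
  (((2 * kappa + 3) `^ (- q) * r `^ q / Cmu ^+ n0)%:E * (m a r^-1)%:E <=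
    muhat d a mu q (Ba d a None r))%E.
Proof.
move=> r0 r2; set rho := r^-1.
have rho0 : 0 < rho by rewrite invr_gt0.
have rr : r * rho = 1 by rewrite /rho mulfV // gt_eqF.
have rho2 : 1 <= 2 * rho by nra.
have k1 := kappa1; have Cmu1 := Cmu_ge1.
have Cmu0 : 0 < Cmu by exact: lt_le_trans Cmu1.
have [_ hz] := hup; have [z [hz1 hz2]] := hz _ rho2.
rewrite /dball /= in hz1 hz2; move/negP: hz1; rewrite -leNgt => hz1.
set c := (2 * kappa + 3) `^ (- q) * r `^ q.
have c0 : 0 < c by rewrite mulr_gt0 // pw_gt0 //; lra.
apply: (le_trans _ (muhat_lb q _ z _ c rho0 (ltW c0) _)); last first.
  move=> y hy; have t1 := tri_a z y; have t2 := d_tri a z y.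
  split.
    rewrite Ba_none -{1}rr ltr_pM2l //; lra.
  have -> : c = ((2 * kappa + 3) * rho) `^ (- q).
    rewrite powRM ?(ltW rho0) //; last lra.
    by rewrite /rho pw_inv // opprK.
  apply: pw_decr; first exact: q0.
    by rewrite (lt_le_trans ltr01) // lerDl d_ge0.
  nra.
rewrite -!EFinM lee_fin -mulrA ler_pM2l // mulrC.
rewrite ler_pdivrMr ?exprn_gt0 // mulrC.
apply: (le_trans _ (m_dbln _ _ _ rho0)).
apply: m_sub => //; first by rewrite mulr_gt0 // exprn_gt0.
move=> y; rewrite /dball /= => hy.
have := d_tri z a y; rewrite (d_sym z a) => h.
have := hn0; nra.
Qed.
Definition cA := (2 * kappa + 3) `^ (- q) / Cmu ^+ n0 * 2 `^ (- q).
Definition cB := (9 / 4) `^ (- q) / Cmu ^+ 6.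

Lemma pw2_le1 : (2:R) `^ (- q) <= 1.
Proof.
have := q0 => q0'.
have l0 : 0 <= ln (2:R) by rewrite ln_ge0 // ler1n.
rewrite pw_pos // -[X in _ <= X]expR0 ler_expR; nra.
Qed.

Lemma Llow (x : option X) r c : 0 < r -> r <= 2 -> dhat d a x / 6 <= r ->
  0 <= c -> c <= cA -> c <= cB ->
  ((c * r `^ q)%:E * (m a r^-1)%:E <= muhat d a mu q (Ba d a x r))%E.
Proof.
move=> r0 r2 hx c0 cA' cB'.
have k1 := kappa1; have Cmu1 := Cmu_ge1.
have Cmu0 : 0 < Cmu by exact: lt_le_trans Cmu1.
have rq0 : 0 < r `^ q by rewrite pw_gt0.
have rho0 : 0 < r^-1 by rewrite invr_gt0.
have mr0 := m_gt0 a _ rho0.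
have K0 : 0 < (2 * kappa + 3) `^ (- q) by rewrite pw_gt0 //; lra.
have Cn0 : 0 < Cmu ^+ n0 by rewrite exprn_gt0.
have p2 := pw2_le1.
have p20 : 0 < (2:R) `^ (- q) by rewrite pw_gt0.
case: x hx => [x|] /= hx; last first.
  apply: (le_trans _ (Linf _ r0 r2)); rewrite lee_fin ler_wpM2r ?(ltW mr0) //.
  have -> : (2 * kappa + 3) `^ (- q) * r `^ q / Cmu ^+ n0 =
    ((2 * kappa + 3) `^ (- q) / Cmu ^+ n0) * r `^ q by rewrite mulrAC.
  rewrite ler_pM2r //; apply: (le_trans cA'); rewrite /cA.
  by rewrite ler_piMr // divr_ge0 // ?ltW.
set A := 1 + d a x in hx *.
have A1 : 1 <= A by rewrite lerDl d_ge0.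
have A0 : 0 < A by exact: lt_le_trans A1.
have eA : A = 1 + d a x by [].
have h6 : 1 <= 6 * (r * A).
  have e : 1 = 1 / A / 6 * (6 * A) by field; rewrite gt_eqF.
  rewrite [X in X <= _]e; have -> : 6 * (r * A) = r * (6 * A) by ring.
  by rewrite ler_pM2r // mulr_gt0.
have [hrA|hrA] := leP 2 (r * A).
- have r20 : 0 < r / 2 by rewrite divr_gt0.
  apply: (le_trans _ (muhat_mono q (Ba d a None (r / 2)) _ _)); last first.
    move=> y; rewrite Ba_none Ba_some -/A => hy.
    have t1 := d_tri x a y; rewrite (d_sym x a) in t1.
    have B1 : 1 <= 1 + d a y by rewrite lerDl d_ge0.
    have h1 : 2 * (1 + d a y) <= r * A * (1 + d a y) by rewrite ler_pM2r //; lra.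
    have h2 : 2 * A < r * (1 + d a y) * A.
      by rewrite ltr_pM2r //; lra.
    nra.
  apply: (le_trans _ (Linf _ r20 _)); last by lra.
  rewrite lee_fin.
  have -> : (r / 2) `^ q = r `^ q * 2 `^ (- q).
    by rewrite powRM ?(ltW r0) // pw_inv.
  have hmr : m a r^-1 <= m a (r / 2)^-1.
    by apply: m_le => //; rewrite invf_div; lra.
  apply: (le_trans (ler_wpM2l _ hmr)); first by rewrite mulr_ge0 // ltW.
  have mr2 : 0 <= m a (r / 2)^-1 by rewrite ltW // m_gt0 // invr_gt0.
  rewrite ler_wpM2r //.
  have -> : (2 * kappa + 3) `^ (- q) * (r `^ q * 2 `^ (- q)) / Cmu ^+ n0 =
    cA * r `^ q by rewrite /cA; ring.
  by rewrite ler_pM2r.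
- have A80 : 0 < A / 8 by rewrite divr_gt0.
  set c' := (9 / 4) `^ (- q) * r `^ q.
  have c'0 : 0 < c' by rewrite mulr_gt0 // pw_gt0.
  apply: (le_trans _ (muhat_lb q _ x _ c' A80 (ltW c'0) _)); last first.
    move=> y hy; have t0 := d_ge0 x y; have tr1 := tri_a x y.
    have tr2 := d_tri a x y.
    set B := 1 + d a y in tr1 tr2 *.
    have eB : B = 1 + d a y by [].
    have B0 : 0 < B by rewrite eB (lt_le_trans ltr01) // lerDl d_ge0.
    split.
      rewrite Ba_some -/A -/B.
      have hB : B <= 6 * (r * A) * B by rewrite ler_pMl //.
      have -> : r * (A * B) = (r * A) * B by ring.
      nra.
    have -> : c' = (9 / 4 * r^-1) `^ (- q).
      by rewrite powRM // ?ltW // pw_inv // opprK.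
    apply: pw_decr => //; first exact: q0.
    have eA' : A = (r * A) * r^-1 by rewrite mulrAC mulfV ?gt_eqF // mul1r.
    nra.
  rewrite -!EFinM lee_fin.
  have hmr : m a r^-1 <= Cmu ^+ 6 * m x (A / 8).
    apply: (le_trans _ (m_dbln _ _ _ A80)).
    apply: m_sub => //; first by rewrite mulr_gt0 // exprn_gt0.
    move=> y; rewrite /dball /= => hy.
    have := d_tri x a y; rewrite (d_sym x a) => h.
    have e : (2:R) ^+ 6 * (A / 8) = 8 * A by rewrite !exprS expr0; field.
    rewrite e.
    have : r^-1 <= 6 * A.
      rewrite -(ler_pM2l r0) mulfV ?gt_eqF //; lra.
    lra.
  have C6 : 0 < Cmu ^+ 6 by rewrite exprn_gt0.
  apply: (le_trans (y := cB * r `^ q * m a r^-1)).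
    by rewrite ler_wpM2r ?(ltW mr0) // ler_pM2r.
  rewrite /cB /c'.
  have -> : (9 / 4) `^ (- q) / Cmu ^+ 6 * r `^ q * m a r^-1 =
    ((9 / 4) `^ (- q) * r `^ q) * (m a r^-1 / Cmu ^+ 6) by ring.
  rewrite ler_pM2l ?mulr_gt0 ?pw_gt0 //.
  by rewrite ler_pdivrMr // mulrC.
Qed.
Definition zq := (2:R) `^ (s - q).
Definition G := 2 `^ s / Cs / (1 - zq).

Lemma zq_gt0 : 0 < zq. Proof. by rewrite pw_gt0. Qed.
Lemma zq_lt1 : zq < 1.
Proof.
have l0 : 0 < ln (2:R) by rewrite ln_gt0 // ltr1n.
rewrite /zq pw_pos // -[X in _ < X]expR0 ltr_expR; have := sq; nra.
Qed.

Lemma growth P rho : 1 <= rho -> 1 <= P -> m a (P * rho) <= P `^ s / Cs * m a rho.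
Proof.
move=> r1 P1; have r0 : 0 < rho by exact: lt_le_trans r1.
have P0 : 0 < P by exact: lt_le_trans P1.
have h := hgr _ _ r1 (ler_peMl (ltW r0) P1).
have e : rho / (P * rho) = P^-1 by field; rewrite !gt_eqF.
rewrite e in h.
have Ps0 : 0 < P `^ s by rewrite pw_gt0.
have m1 : 0 < m a rho by exact: m_gt0.
have m2 : 0 < m a (P * rho) by rewrite m_gt0 // mulr_gt0.
move: h; rewrite pw_inv // powRN ler_pdivlMr // => h.
rewrite -ler_pdivrMl ?divr_gt0 //.
have -> : (P `^ s / Cs)^-1 * (m a (P * rho)) = Cs * (P `^ s)^-1 * m a (P * rho).
  by field; rewrite !gt_eqF.
exact: h.
Qed.

Lemma series_ub (A : set (option X)) rho : 1 <= rho ->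
  (forall y, A (Some y) -> rho <= 1 + d a y) ->
  (muhat d a mu q A <= ((rho `^ (- q) * G) * m a rho)%:E)%E.
Proof.
move=> r1 HA; have r0 : 0 < rho by exact: lt_le_trans r1.
pose c k := (2 ^+ k * rho) `^ (- q).
pose B k := dball d a (2 ^+ k.+1 * rho).
pose t k y := ((c k * \1_(B k) y)%:E : \bar R).
have t0 : forall k y, (0 <= t k y)%E.
  by move=> k y; rewrite lee_fin mulr_ge0 // powR_ge0.
have mt : forall k, measurable_fun [set: X] (t k : X -> \bar R).
  move=> k; rewrite (_ : t k = EFin \o (cst (c k) \* \1_(B k))) //.
  apply/measurable_EFinP; apply: measurable_funM.
    exact: measurable_cst.
  exact: measurable_indic (ball_meas _ _).
apply: (@le_trans _ _ (\int[mu]_(y in setT) \sum_(k <oo) t k y)%E).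
  rewrite /muhat; apply: my_le => [y _|y _|y hy].
  - by rewrite lee_fin powR_ge0.
  - by apply: nneseries_ge0 => k _ _.
  split => //; have hr := HA y hy.
  pose P n := (1 + d a y < 2 ^+ n.+1 * rho).
  have exP : exists n, P n.
    have y0 : 0 <= 1 + d a y by rewrite addr_ge0 ?d_ge0.
    have h := archi_boundP y0; set N := Num.Def.archi_bound _ in h.
    exists N; rewrite /P; apply: (lt_le_trans h).
    have hN : (N < 2 ^ N.+1)%N by apply: (ltn_trans (ltnSn N)); apply: ltn_expl.
    have : N%:R <= (2 ^+ N.+1 : R) by rewrite -natrX ler_nat ltnW.
    move=> h2; apply: (le_trans h2); rewrite ler_peMr // ?exprn_ge0 //.
  case: (ex_minnP exP) => k Pk mink.
  have low : 2 ^+ k * rho <= 1 + d a y.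
    move: Pk mink; case: k => [|k] Pk mink; first by rewrite expr0 mul1r.
    rewrite leNgt; apply/negP => h; have := mink k h; by rewrite ltnn.
  apply: (@le_trans _ _ (t k y)).
    rewrite /t /c indicE mem_set ?mulr1; last first.
      rewrite /B /dball /=; move: Pk; rewrite /P; lra.
    rewrite lee_fin; apply: pw_decr (q0) _ low.
    by rewrite mulr_gt0 // exprn_gt0.
  apply: (le_trans _ (nneseries_lim_ge k.+1 _)); last by move=> n _ _; exact: t0.
  rewrite big_nat_recr //= leeDr //.
  by rewrite sume_ge0 // => n _; exact: t0.
rewrite integral_nneseries //.
set c0 := rho `^ (- q) * 2 `^ s / Cs * m a rho.
have mr0 : 0 < m a rho by exact: m_gt0.
have c00 : 0 < c0 by rewrite /c0 !mulr_gt0 ?pw_gt0 ?invr_gt0.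
have z0 := zq_gt0; have z1 := zq_lt1.
apply: (@le_trans _ _ (\sum_(n <oo) ((c0 * zq ^+ n)%:E))%E).
  apply: lee_nneseries => [n _ _|n _]; first by apply: integral_ge0 => y _; exact: t0.
  have e : (\int[mu]_(x in setT) t n x = (c n)%:E * mu (B n))%E.
    rewrite /t; under eq_integral do rewrite EFinM.
    rewrite ge0_integralZl_EFin //.
    - by rewrite integral_indic ?setIT //; exact: ball_meas.
    - by apply/measurable_EFinP; exact: measurable_indic (ball_meas _ _).
    - by rewrite powR_ge0.
  have Bp : 0 < 2 ^+ n.+1 * rho by rewrite mulr_gt0 // exprn_gt0.
  rewrite e /B (mE _ _ Bp) -EFinM lee_fin.
  have P1 : 1 <= (2 ^+ n.+1 : R) by rewrite exprn_ege1 // ler1n.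
  have hg := growth _ _ r1 P1.
  have -> : c n = (2 `^ (- q)) ^+ n * rho `^ (- q).
    by rewrite /c powRM ?exprn_ge0 ?(ltW r0) // pw_2k.
  rewrite pw_2k in hg.
  have cp : 0 <= (2 `^ (- q)) ^+ n * rho `^ (- q) by rewrite mulr_ge0 ?exprn_ge0 ?powR_ge0.
  apply: (le_trans (ler_wpM2l cp hg)).
  have ez : zq = 2 `^ s * 2 `^ (- q) by rewrite /zq powRD //; apply/implyP => _.
  rewrite /c0 ez exprMn exprS le_eqVlt; apply/orP; left; apply/eqP; ring.
have -> : rho `^ (- q) * G * m a rho = c0 * (1 - zq)^-1.
  by rewrite /G /c0; field; rewrite gt_eqF // ?subr_gt0 // gt_eqF.
apply: lime_le.
  by apply: is_cvg_nneseries => n _ _; rewrite lee_fin mulr_ge0 ?exprn_ge0 ?ltW.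
apply: nearW => n; rewrite sumEFin lee_fin.
have := @geometric_le_lim R n c0 zq (ltW c00) z0.
rewrite gtr0_norm // => /(_ z1); apply: le_trans.
by rewrite le_eqVlt; apply/orP; left.
Qed.
Definition KU := G * Cmu ^+ 4 * 7 `^ q.

Lemma G_gt0 : 0 < G.
Proof.
by rewrite /G !divr_gt0 ?pw_gt0 // subr_gt0 zq_lt1.
Qed.

Lemma Uup (x : option X) r : 0 < r -> r <= 2 -> dhat d a x / 6 <= r ->
  (muhat d a mu q (Ba d a x r) <= ((KU * r `^ q) * m a r^-1)%:E)%E.
Proof.
move=> r0 r2 hx.
have incl : forall y, Ba d a x r (Some y) -> 1 < 7 * r * (1 + d a y).
  have B1 : forall y, 1 <= 1 + d a y by move=> y; rewrite lerDl d_ge0.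
  case: x hx => [x|] /= hx y; last first.
    rewrite Ba_none => h; have := B1 y; nra.
  rewrite Ba_some; set A := 1 + d a x; set B := 1 + d a y => h.
  have A1 : 1 <= A by rewrite lerDl d_ge0.
  have A0 : 0 < A by exact: lt_le_trans A1.
  have h6 : 1 <= 6 * (r * A).
    have e : 1 = 1 / A / 6 * (6 * A) by field; rewrite gt_eqF.
    rewrite [X in X <= _]e; have -> : 6 * (r * A) = r * (6 * A) by ring.
    by rewrite ler_pM2r // mulr_gt0.
  have tr := tri_a x y; have eA : A = 1 + d a x by []; have eB : B = 1 + d a y by [].
  have hB1 := B1 y; rewrite -eB in hB1.
  have hB : B <= 6 * (r * A) * B by rewrite ler_pMl //; lra.
  have : A < 7 * (r * A * B) by nra.
  have -> : 7 * (r * A * B) = A * (7 * r * B) by ring.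
  by rewrite -{1}(mulr1 A) ltr_pM2l.
have G0 := G_gt0; have Cmu1 := Cmu_ge1.
have C40 : 1 <= Cmu ^+ 4 by rewrite exprn_ege1.
have rq0 : 0 < r `^ q by rewrite pw_gt0.
have q0' := q0.
have p70 : 0 < (7:R) `^ q by rewrite pw_gt0.
have mr0 : 0 < m a r^-1 by rewrite m_gt0 // invr_gt0.
case: (leP (7 * r) 1) => h7.
- have r70 : 0 < 7 * r by rewrite mulr_gt0.
  have rho1 : 1 <= (7 * r)^-1 by rewrite invf_ge1.
  apply: (le_trans (series_ub _ _ rho1 _)).
    move=> y /incl h; rewrite -(ler_pM2l r70) mulfV ?gt_eqF //; lra.
  have r0' := ltW r0.
  rewrite lee_fin pw_inv // opprK powRM //.
  have hmr : m a (7 * r)^-1 <= m a r^-1.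
    apply: m_le; first by rewrite invr_gt0.
    by rewrite lef_pV2 ?posrE //; lra.
  rewrite /KU.
  have -> : 7 `^ q * r `^ q * G * m a (7 * r)^-1 =
    (G * 7 `^ q * r `^ q) * m a (7 * r)^-1 by ring.
  have -> : G * Cmu ^+ 4 * 7 `^ q * r `^ q * m a r^-1 =
    (G * 7 `^ q * r `^ q) * (Cmu ^+ 4 * m a r^-1) by ring.
  have K0 := mulr_gt0 (mulr_gt0 G0 p70) rq0.
  rewrite ler_pM2l //.
  have h := ler_peMl (ltW mr0) C40.
  exact: le_trans hmr h.
- apply: (le_trans (series_ub _ _ (lexx 1) _)).
    by move=> y _; rewrite lerDl d_ge0.
  rewrite lee_fin powR1 /= mul1r.
  have h16 : m a 1 <= Cmu ^+ 4 * m a r^-1.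
    have ri0 : 0 < r^-1 by rewrite invr_gt0.
    apply: (le_trans _ (m_dbln a _ 4 ri0)).
    apply: m_le => //; rewrite -[X in X <= _](mulfV (x := r)) ?gt_eqF //.
    have e : (2:R) ^+ 4 = 16 by rewrite !exprS expr0; ring.
    rewrite e; rewrite ler_pM2r ?invr_gt0 //; lra.
  have h1 : 1 <= (7 * r) `^ q.
    have := @pw_incr _ q _ _ (ltW q0') ltr01 (ltW h7); by rewrite powR1.
  have r0' := ltW r0.
  rewrite powRM // in h1.
  rewrite /KU.
  have -> : G * Cmu ^+ 4 * 7 `^ q * r `^ q * m a r^-1 =
    G * (7 `^ q * r `^ q) * (Cmu ^+ 4 * m a r^-1) by ring.
  rewrite -mulrA ler_pM2l //.
  have hm1 : 0 < m a 1 by rewrite m_gt0.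
  nra.
Qed.
End Case2. End Base.

Theorem lemma4p1 (R : realType) (q Cmu : R) :
  exists2 C1 : R, 0 < C1 &
  forall (kappa s Cs : R), 0 < s -> 0 < Cs -> s < q ->
  exists2 C2 : R, 0 < C2 &
  forall (d0 : measure_display) (X : measurableType d0) (d : X -> X -> R)
         (mu : {measure set X -> \bar R}) (a : X),
    is_metric d ->
    (forall U, dopen d U -> measurable U) ->
    measure_is_complete mu ->
    (forall x r, 0 < r -> (0 < mu (dball d x r))%E /\ (mu (dball d x r) < +oo)%E) ->
    unbounded d ->
    unif_perfect_at d a kappa ->
    doubling d mu Cmu ->
    (forall r R' : R, 1 <= r -> r <= R' ->
       Cs * (r / R') `^ s <= fine (mu (dball d a r)) / fine (mu (dball d a R'))) ->
    (* first case *)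
    (forall (x : X) (r : R), 0 < r -> r <= dhat d a (Some x) / 3 ->
       ((C1^-1)%:E * ((dhat d a (Some x) `^ q)%:E
                        * mu (dball d x (r / (dhat d a (Some x)) ^+ 2))) <=
          muhat d a mu q (Ba d a (Some x) r) /\
        muhat d a mu q (Ba d a (Some x) r) <=
          C1%:E * ((dhat d a (Some x) `^ q)%:E
                     * mu (dball d x (r / (dhat d a (Some x)) ^+ 2))))%E) /\
    (* second case *)
    (forall (x : option X) (r : R), 0 < r -> dhat d a x / 6 <= r -> r <= 2 ->
       ((C2^-1)%:E * ((r `^ q)%:E * mu (dball d a r^-1)) <=
          muhat d a mu q (Ba d a x r) /\
        muhat d a mu q (Ba d a x r) <=
          C2%:E * ((r `^ q)%:E * mu (dball d a r^-1)))%E).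
Proof.
Proof.
have [hC|hC] := leP 1 Cmu; last first.
  exists 1 => // kappa s Cs s0 Cs0 sq; exists 1 => // d0 X d mu a hm hop _ hpos _ _ hdb.
  by have := Cmu_ge1 _ _ _ _ _ a _ hm hop hpos hdb; rewrite leNgt hC.
have C0 : 0 < Cmu by exact: lt_le_trans hC.
exists (2 `^ `|q| * Cmu); first by rewrite mulr_gt0 // pw_gt0.
move=> kappa s Cs s0 Cs0 sq.
have [hk|hk] := leP kappa 1.
  exists 1 => // d0 X d mu a _ _ _ _ _ [hk' _].
  by exfalso; move: hk'; rewrite ltNge hk.
have q0 : 0 < q by exact: lt_trans sq.
have cA0 : 0 < cA R Cmu kappa q.
  rewrite /cA !mulr_gt0 ?pw_gt0 ?invr_gt0 ?exprn_gt0 //; lra.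
have cB0 : 0 < cB R Cmu q.
  by rewrite /cB !mulr_gt0 ?pw_gt0 ?invr_gt0 ?exprn_gt0.
have KU0 : 0 < KU R Cmu s Cs q.
  have G0 := G_gt0 _ _ _ _ Cs0 sq.
  have h7 : 0 < (7:R) `^ q by rewrite pw_gt0.
  exact: mulr_gt0 (mulr_gt0 G0 (exprn_gt0 4 C0)) h7.
set C2 := KU R Cmu s Cs q + (cA R Cmu kappa q)^-1 + (cB R Cmu q)^-1.
have C20 : 0 < C2 by rewrite !addr_gt0 // invr_gt0.
exists C2 => // d0 X d mu a hm hop _ hpos _ hup hdb hgr.
split.
  move=> x r r0 hr; exact: (case1 _ _ _ _ _ a _ hm hop hpos hdb q x r r0 hr).
move=> x r r0 hx r2.
have ri0 : 0 < r^-1 by rewrite invr_gt0.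
rewrite (mE _ _ _ _ _ hpos a _ ri0) -!EFinM.
split.
  rewrite mulrA.
  apply: (Llow _ _ _ _ _ a _ hm hop hpos hdb kappa s q s0 sq hup x r _ r0 r2 hx).
  - by rewrite ltW // invr_gt0.
  - have h : (cA R Cmu kappa q)^-1 <= C2.
      rewrite /C2; have := invr_gt0 (cB R Cmu q); rewrite cB0 => ?; lra.
    by rewrite -(invrK (cA R Cmu kappa q)) lef_pV2 ?posrE ?invr_gt0.
  - have h : (cB R Cmu q)^-1 <= C2.
      rewrite /C2; have := invr_gt0 (cA R Cmu kappa q); rewrite cA0 => ?; lra.
    by rewrite -(invrK (cB R Cmu q)) lef_pV2 ?posrE ?invr_gt0.
apply: (le_trans (Uup _ _ _ _ _ a _ hm hop hpos hdb s Cs q s0 Cs0 sq hgr x r r0 r2 hx)).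
have mr0 : 0 <= m R d0 X d mu a r^-1 by rewrite ltW // (m_gt0 _ _ _ _ _ hpos).
rewrite lee_fin mulrA ler_wpM2r // ler_wpM2r ?powR_ge0 //.
rewrite /C2 -addrA lerDl addr_ge0 // ltW // invr_gt0 //.
Qed.
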